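(* Let $R$ be a ring, $\mathfrak{M}$ a formation of $R$-modules, $G$ a group and $A$ an $RG$-module. (i) If $L\le H$ are subgroups of $G$ and $A/C_A(H)\in\mathfrak{M}$, then $A/C_A(L)\in\mathfrak{M}$. (ii) If $L,H$ are subgroups of $G$ with $A/C_A(H)\in\mathfrak{M}$ and $A/C_A(L)\in\mathfrak{M}$, then $A/C_A(\langle H,L\rangle)\in\mathfrak{M}$.
   Context: For a subgroup $H\le G$, $C_A(H)=\{a\in A: ah=a \text{ for all } h\in H\}$ (an $R$-submodule). A class $\mathfrak{M}$ of $R$-modules is a formation if (F1) whenever $A\in\mathfrak{M}$ and $B$ is an $R$-submodule of $A$, then $A/B\in\mathfrak{M}$; and (F2) whenever $A$ is an $R$-module and $B_1,\dots,B_k$ are $R$-submodules with $A/B_j\in\mathfrak{M}$ for all $j$, then $A/(B_1\cap\dots\cap B_k)\in\mathfrak{M}$. *)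

(* Defs.v *)
From HB Require Import structures.
From mathcomp Require Import all_boot all_order all_algebra.
From mathcomp Require Import monoid.
Set Implicit Arguments. Unset Strict Implicit. Unset Printing Implicit Defensive.
Import GRing.Theory.
Local Open Scope ring_scope.

(* Modules over a ring R are MathComp left modules [lmodType R].
   Submodules and "classes" are Prop-valued predicates (membership in
   C_A(H) is not decidable in general). *)

Section Defs.
Variable R : pzRingType.

Definition is_submod (A : lmodType R) (B : A -> Prop) : Prop :=
  B 0 /\ forall (r : R) (a b : A), B a -> B b -> B (r *: a + b).

Definition is_Rlinear (A Q : lmodType R) (f : A -> Q) : Prop :=
  forall (r : R) (a b : A), f (r *: a + b) = r *: f a + f b.

(* "A/B belongs to the class M": the quotient A/B is (isomorphic to) a
   member of M, i.e. there is a surjective R-linear map from A onto a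
   module of M whose kernel is exactly B. *)
Definition quot_in (M : lmodType R -> Prop) (A : lmodType R) (B : A -> Prop)
  : Prop :=
  exists (Q : lmodType R) (f : A -> Q),
    [/\ M Q, is_Rlinear f, (forall q : Q, exists a : A, f a = q)
      & (forall a : A, f a = 0 <-> B a)].

Definition formation (M : lmodType R -> Prop) : Prop :=
  (forall (A : lmodType R) (B : A -> Prop),
      M A -> is_submod B -> quot_in M B)
  /\
  (forall (A : lmodType R) (k : nat) (B : 'I_k.+1 -> A -> Prop),
      (forall j, is_submod (B j)) ->
      (forall j, quot_in M (B j)) ->
      quot_in M (fun a => forall j, B j a)).
End Defs.

Section Groups.
Variable G : groupType.
Local Open Scope group_scope.

Definition is_subgroup (H : G -> Prop) : Prop :=
  H 1 /\ (forall x y, H x -> H y -> H (x * y)) /\ (forall x, H x -> H x^-1).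

Definition gen_subgroup (S : G -> Prop) : G -> Prop :=
  fun x => forall K, is_subgroup K -> (forall y, S y -> K y) -> K x.

Definition join_subgroup (H L : G -> Prop) : G -> Prop :=
  gen_subgroup (fun x => H x \/ L x).
End Groups.

Section RGmod.
Variables (R : pzRingType) (G : groupType).
Local Open Scope group_scope.

Definition is_RGaction (A : lmodType R) (act : A -> G -> A) : Prop :=
  [/\ (forall a, act a 1 = a),
      (forall a g h, act a (g * h) = act (act a g) h)
    & (forall g, is_Rlinear (fun a => act a g))].

Definition centr (A : lmodType R) (act : A -> G -> A) (H : G -> Prop)
  : A -> Prop :=
  fun a => forall h, H h -> act a h = a.
End RGmod.

(* Main.v *)
Require Import Defs.
From HB Require Import structures.
From mathcomp Require Import all_boot all_order all_algebra.
From mathcomp Require Import monoid.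
Import GRing.Theory.
Local Open Scope ring_scope.

Lemma linB (R : pzRingType) (A Q : lmodType R) (f : A -> Q) :
  is_Rlinear f -> forall a b, f (a - b) = f a - f b.
Proof.
move=> lf a b; have := lf (-1) b a.
by rewrite !scaleN1r addrC => ->; rewrite addrC.
Qed.

Lemma lin0 (R : pzRingType) (A Q : lmodType R) (f : A -> Q) :
  is_Rlinear f -> f 0 = 0.
Proof. by move=> lf; have := @linB _ _ _ f lf 0 0; rewrite !subrr. Qed.

Lemma centr_sub (R : pzRingType) (G : groupType) (A : lmodType R)
  (act : A -> G -> A) (H : G -> Prop) :
  is_RGaction act -> is_submod (centr act H).
Proof.
case=> _ _ lin; split.
  by move=> h _; exact: (@lin0 _ _ _ (fun a => act a h) (lin h)).
by move=> r a b ca cb h Hh; rewrite (lin h) ca // cb.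
Qed.

Lemma quot_ext (R : pzRingType) (M : lmodType R -> Prop) (A : lmodType R)
  (B C : A -> Prop) : (forall a, B a <-> C a) -> quot_in M B -> quot_in M C.
Proof.
move=> e [Q [f [MQ lf sf kf]]]; exists Q, f; split=> // a.
by split=> [/kf/e|/e/kf].
Qed.

Theorem lemma1 (R : pzRingType) (M : lmodType R -> Prop) (G : groupType)
  (A : lmodType R) (act : A -> G -> A) :
  formation M -> is_RGaction act ->
  (forall L H : G -> Prop, is_subgroup L -> is_subgroup H ->
     (forall x, L x -> H x) ->
     quot_in M (centr act H) -> quot_in M (centr act L))
  /\
  (forall L H : G -> Prop, is_subgroup L -> is_subgroup H ->
     quot_in M (centr act H) -> quot_in M (centr act L) ->
     quot_in M (centr act (join_subgroup H L))).
Proof.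
move=> [F1 F2] act_ok; split.
  move=> L H _ _ LH [Q [f [MQ lf sf kf]]].
  pose B := fun q : Q => exists a, f a = q /\ centr act L a.
  have subB : is_submod B.
    have [_ subL] := @centr_sub _ _ _ act L act_ok; split.
      by exists 0; split; [apply: (@lin0 _ _ _ f lf) | case: (@centr_sub _ _ _ act L act_ok)].
    move=> r _ _ [a [<- ca]] [b [<- cb]].
    by exists (r *: a + b); split; [apply: lf | apply: subL].
  have [Q' [g [MQ' lg sg kg]]] := F1 Q B MQ subB.
  exists Q', (fun a => g (f a)); split=> //.
  - by move=> r a b /=; rewrite lf lg.
  - by move=> q; have [y <-] := sg q; have [a <-] := sf y; exists a.
  move=> a; split; [move/kg|move=> h; apply/kg; move: h]...
    move=> [a' [e ca']].
    have : centr act H (a - a') by apply/kf; rewrite (@linB _ _ _ f lf) e subrr.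
    move=> cH.
    have cL : centr act L (a - a') by move=> h Lh; apply: cH; apply: LH.
    have [_ subL] := @centr_sub _ _ _ act L act_ok.
    have := subL 1 _ _ cL ca'; rewrite scale1r subrK //.
  by move=> ca; exists a.
move=> L H sL sH qH qL.
pose B := fun j : 'I_2 => if j == ord0 then centr act H else centr act L.
have hB : forall j, is_submod (B j).
  by move=> j; rewrite /B; case: ifP => _; apply: (@centr_sub _ _ _ act _ act_ok).
have qB : forall j, quot_in M (B j).
  by move=> j; rewrite /B; case: ifP.
apply: quot_ext (F2 A 1 B hB qB) => a; split.
  move=> cj; have cH := cj ord0; have cL := cj (lift ord0 ord0).
  rewrite /B /= in cH cL.
  move=> g jg; apply: (jg (fun g => act a g = a)).
  - have [a1 aM lin] := act_ok; split; first exact: a1.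
    split; first by move=> x y ex ey; rewrite aM ex ey.
    by move=> x ex; rewrite -{1}ex -aM mulgV a1.
  by move=> y [Hy|Ly]; [apply: cH | apply: cL].
move=> cj j; rewrite /B; case: ifP => _ h Hh; apply: cj; move=> K _ sK; apply: sK; auto.
Qed.
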